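(* Consider the static load balancing game with $m$ servers and $n$ players described in the context. There exists a function $\Phi$ on the set of action profiles $A_1\times\cdots\times A_n$ such that for every player $i\in[n]$ and any two action profiles $(a_i,a_{-i})$ and $(a'_i,a_{-i})$ that differ only in the action of player $i$, $$\Phi(a_i,a_{-i})-\Phi(a'_i,a_{-i})=D_i(a_i,a_{-i})-D_i(a'_i,a_{-i}),$$ i.e., the game is an exact potential game. In particular, the game admits a pure Nash equilibrium, and the best-response dynamics (players sequentially replacing their action by a best response to the current actions of the others) converge to a pure Nash equilibrium.
   Context: Static load balancing game: there are $m$ servers $[m]=\{1,\dots,m\}$ with service rates $\mu_j>0$ and initial loads $s_j^0\ge 0$, and $n$ players $[n]=\{1,\dots,n\}$; player $i$ holds a job of length $\lambda_i>0$ which it can split fractionally among servers. Player $i$'s action set is the probability simplex $A_i=\{a_i=(a_{i1},\dots,a_{im}):\sum_{j=1}^m a_{ij}=1,\ a_{ij}\ge 0\}$, where $a_{ij}$ is the fraction of job $i$ placed on server $j$. Given an action profile $a=(a_1,\dots,a_n)$, the cost of player $i$ is $$D_i(a)=\sum_{j=1}^m \lambda_i a_{ij}\left(\frac{\lambda_i a_{ij}}{2\mu_j}+\frac{s_j^0+\sum_{k\neq i}\lambda_k a_{kj}}{\mu_j}\right),$$ and each player wishes to minimize its own cost. A pure Nash equilibrium is a profile $a$ with $D_i(a_i,a_{-i})\le D_i(a_i',a_{-i})$ for all $i$ and all $a_i'\in A_i$. *)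

(* Defs.v *)
From HB Require Import structures.
From mathcomp Require Import all_boot all_order all_algebra.
From mathcomp Require Import all_classical all_reals topology normedtype sequences.
Set Implicit Arguments. Unset Strict Implicit. Unset Printing Implicit Defensive.
Import Order.TTheory GRing.Theory Num.Theory.
Local Open Scope ring_scope.

(* An action profile: a k j = fraction of job k placed on server j. *)
Definition profile (R : realType) (n m : nat) := 'I_n -> 'I_m -> R.

Definition in_simplex (R : realType) (m : nat) (b : 'I_m -> R) : Prop :=
  (forall j, 0 <= b j) /\ \sum_(j < m) b j = 1.

Definition feasible (R : realType) (n m : nat) (a : profile R n m) : Prop :=
  forall k, in_simplex (a k).

Definition upd (R : realType) (n m : nat) (a : profile R n m) (i : 'I_n)
  (b : 'I_m -> R) : profile R n m :=
  fun k => if k == i then b else a k.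

Definition cost (R : realType) (n m : nat) (mu s0 : 'I_m -> R) (lam : 'I_n -> R)
  (i : 'I_n) (a : profile R n m) : R :=
  \sum_(j < m) lam i * a i j *
     (lam i * a i j / (2 * mu j)
      + (s0 j + \sum_(k < n | k != i) lam k * a k j) / mu j).

Definition best_response (R : realType) (n m : nat) (mu s0 : 'I_m -> R)
  (lam : 'I_n -> R) (i : 'I_n) (a : profile R n m) (b : 'I_m -> R) : Prop :=
  in_simplex b /\
  forall b', in_simplex b' -> cost mu s0 lam i (upd a i b) <= cost mu s0 lam i (upd a i b').

Definition pure_NE (R : realType) (n m : nat) (mu s0 : 'I_m -> R)
  (lam : 'I_n -> R) (a : profile R n m) : Prop :=
  feasible a /\
  forall i (b : 'I_m -> R), in_simplex b ->
    cost mu s0 lam i a <= cost mu s0 lam i (upd a i b).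

Definition exact_potential (R : realType) (n m : nat) (mu s0 : 'I_m -> R)
  (lam : 'I_n -> R) (Phi : profile R n m -> R) : Prop :=
  forall (a : profile R n m) (i : 'I_n) (b b' : 'I_m -> R),
    feasible a -> in_simplex b -> in_simplex b' ->
    Phi (upd a i b) - Phi (upd a i b') =
    cost mu s0 lam i (upd a i b) - cost mu s0 lam i (upd a i b').

Definition BR_dynamics (R : realType) (n m : nat) (mu s0 : 'I_m -> R)
  (lam : 'I_n -> R) (sched : nat -> 'I_n) (x : nat -> profile R n m) : Prop :=
  feasible (x 0%N) /\
  (forall t, nat_of_ord (sched t) = (t %% n)%N) /\
  (forall t, exists b, best_response mu s0 lam (sched t) (x t) b /\
                       x t.+1 = upd (x t) (sched t) b).

(* Main.v *)
Require Import Defs.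
From HB Require Import structures.
From mathcomp Require Import all_boot all_order all_algebra.
From mathcomp Require Import all_classical all_reals topology normedtype sequences.
From mathcomp Require Import ring lra.
Import Order.TTheory GRing.Theory Num.Theory numFieldNormedType.Exports.
Local Open Scope classical_set_scope.
Local Open Scope ring_scope.
Set Implicit Arguments. Unset Strict Implicit.

Definition FF (R : realType) (m : nat) (mu c : 'I_m -> R) (l : R) (b : 'I_m -> R) : R :=
  \sum_(j < m) l * b j * (l * b j / (2 * mu j) + c j / mu j).
Definition gl (R : realType) (m : nat) (mu c : 'I_m -> R) (l : R) (b : 'I_m -> R) (j : 'I_m) : R :=
  (l * b j + c j) / mu j.
Definition minlev (R : realType) (m : nat) (g b : 'I_m -> R) : Prop :=
  forall j, 0 < b j -> forall k, g j <= g k.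
Definition QQ (R : realType) (m : nat) (mu : 'I_m -> R) (l : R) (b b' : 'I_m -> R) : R :=
  \sum_(j < m) l ^+ 2 * (b' j - b j) ^+ 2 / (2 * mu j).

Lemma FF_expand (R : realType) (m : nat) (mu c : 'I_m -> R) (l : R) (b b' : 'I_m -> R) :
  (forall j, 0 < mu j) ->
  FF mu c l b' - FF mu c l b =
  l * \sum_(j < m) (b' j - b j) * gl mu c l b j + QQ mu l b b'.
Proof.
move=> hmu; rewrite /FF /QQ -sumrB mulr_sumr -big_split; apply: eq_bigr => j _.
rewrite /gl; have := hmu j; rewrite lt0r => /andP[h _]. rewrite /=. field; exact: h.
Qed.

Lemma QQ_ge0 (R : realType) (m : nat) (mu : 'I_m -> R) (l : R) (b b' : 'I_m -> R) :
  (forall j, 0 < mu j) -> 0 <= QQ mu l b b'.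
Proof.
move=> hmu; apply: sumr_ge0 => j _; apply: divr_ge0.
  by apply: mulr_ge0; apply: sqr_ge0.
by apply: mulr_ge0 => //; exact: ltW.
Qed.

Lemma sum_le_minlev (R : realType) (m : nat) (g b b' : 'I_m -> R) :
  in_simplex b -> in_simplex b' -> minlev g b ->
  \sum_(j < m) b j * g j <= \sum_(j < m) b' j * g j.
Proof.
move=> [hb0 hb1] [hb0' hb1'] hmin.
have e1 : \sum_(j < m) b j * g j = \sum_(j < m) \sum_(k < m) b j * b' k * g j.
  apply: eq_bigr => j _; rewrite -mulr_suml -mulr_sumr hb1' mulr1; by [].
have e2 : \sum_(j < m) b' j * g j = \sum_(j < m) \sum_(k < m) b k * b' j * g j.
  apply: eq_bigr => j _; rewrite -!mulr_suml hb1 mul1r; by [].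
rewrite e1 e2 [X in _ <= X]exchange_big /=.
apply: ler_sum => j _; apply: ler_sum => k _.
have := hb0 j; rewrite le0r => /orP[/eqP -> | hp]; first by rewrite !mul0r.
apply: ler_wpM2l; first by apply: mulr_ge0.
exact: hmin.
Qed.

Lemma lemA (R : realType) (m : nat) (mu c : 'I_m -> R) (l : R) (b b' : 'I_m -> R) :
  (forall j, 0 < mu j) -> 0 <= l ->
  in_simplex b -> in_simplex b' -> minlev (gl mu c l b) b ->
  FF mu c l b + QQ mu l b b' <= FF mu c l b'.
Proof.
move=> hmu hl hb hb' hmin.
rewrite -subr_ge0 opprD addrA FF_expand // addrK.
apply: mulr_ge0 => //.
under eq_bigr do rewrite mulrBl.
by rewrite sumrB subr_ge0; exact: sum_le_minlev.
Qed.

Lemma lemC (R : realType) (m : nat) (mu c : 'I_m -> R) (l : R) (b b' : 'I_m -> R) :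
  (forall j, 0 < mu j) -> 0 < l ->
  in_simplex b -> in_simplex b' -> minlev (gl mu c l b) b ->
  FF mu c l b' <= FF mu c l b -> b' = b.
Proof.
move=> hmu hl hb hb' hmin hle.
have hA := lemA hmu (ltW hl) hb hb' hmin.
have hQ0 : 0 <= QQ mu l b b' := QQ_ge0 _ _ _ hmu.
have hQ : QQ mu l b b' = 0 by apply/eqP; rewrite eq_le hQ0 andbT; lra.
apply: funext => j.
have h : l ^+ 2 * (b' j - b j) ^+ 2 / (2 * mu j) = 0.
  apply: (psumr_eq0P _ hQ) => // i _; apply: divr_ge0; first by apply: mulr_ge0; apply: sqr_ge0.
  by apply: mulr_ge0 => //; exact: ltW.
have hmj := hmu j; move/eqP: h.
have h1 : l != 0 by rewrite gt_eqF.
have h2 : (2 * mu j)^-1 != 0 by rewrite invr_eq0 mulf_eq0 negb_or gt_eqF // gt_eqF.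
rewrite !mulf_eq0 (negbTE h1) (negbTE h2) /= orbF orbb subr_eq0.
by move/eqP.
Qed.

Lemma sum_two (R : realType) (m : nat) (F : 'I_m -> R) (k j : 'I_m) :
  k != j -> (forall p, p != k -> p != j -> F p = 0) ->
  \sum_(p < m) F p = F k + F j.
Proof.
move=> hkj h0; rewrite (bigD1 k) //= (bigD1 j) /=; last by rewrite eq_sym.
rewrite big1 ?addr0 // => p /andP[h1 h2]; exact: h0.
Qed.

Lemma lemB (R : realType) (m : nat) (mu c : 'I_m -> R) (l : R) (b : 'I_m -> R) :
  (forall j, 0 < mu j) -> 0 < l -> in_simplex b ->
  (forall b', in_simplex b' -> FF mu c l b <= FF mu c l b') ->
  minlev (gl mu c l b) b.
Proof.
move=> hmu hl hb hopt j hj k.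
rewrite leNgt; apply/negP => hkj.
set g := gl mu c l b in hkj.
have hne : k != j by apply/eqP => e; move: hkj; rewrite e lt_irreflexive.
set K := l ^+ 2 / (2 * mu k) + l ^+ 2 / (2 * mu j).
have hK : 0 < K.
  have := hmu k; have := hmu j => hj' hk'.
  by rewrite /K addr_gt0 // divr_gt0 ?exprn_gt0 ?mulr_gt0.
set d := l * (g j - g k).
have hd : 0 < d by rewrite /d mulr_gt0 // subr_gt0.
set e := Num.min (b j) (d / (2 * K)).
have he : 0 < e by rewrite /e lt_min hj divr_gt0 // mulr_gt0.
have heb : e <= b j by rewrite /e ge_min lexx.
have heK : e * K <= d / 2.
  have : e <= d / (2 * K) by rewrite /e ge_min lexx orbT.
  rewrite ler_pdivlMr ?mulr_gt0 // => h.
  rewrite ler_pdivlMr //; by rewrite -mulrA (mulrC K).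
pose dd := fun p : 'I_m => if p == k then e else if p == j then - e else 0.
pose b' := fun p => b p + dd p.
have hbd : forall p, b' p - b p = dd p by move=> p; rewrite /b' addrAC subrr add0r.
have hdd0 : forall p, p != k -> p != j -> dd p = 0.
  by move=> p h1 h2; rewrite /dd (negbTE h1) (negbTE h2).
have ddk : dd k = e by rewrite /dd eqxx.
have ddj : dd j = - e by rewrite /dd eq_sym (negbTE hne) eqxx.
have hb' : in_simplex b'.
  case: hb => hb0 hb1; split.
    move=> p; rewrite /b'; case: (eqVneq p k) => [->|hpk]; first by rewrite ddk addr_ge0 // ltW.
    case: (eqVneq p j) => [->|hpj]; first by rewrite ddj subr_ge0.
    by rewrite hdd0 // addr0.
  rewrite /b' big_split /= hb1 (sum_two hne hdd0) ddk ddj subrr addr0 //.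
have := hopt b' hb'.
rewrite -subr_ge0 FF_expand //.
have -> : \sum_(j0 < m) (b' j0 - b j0) * gl mu c l b j0 = e * g k - e * g j.
  rewrite (@sum_two _ _ _ k j hne); last by move=> p h1 h2; rewrite hbd hdd0 // mul0r.
  by rewrite !hbd ddk ddj mulNr.
have -> : QQ mu l b b' = e ^+ 2 * K.
  rewrite /QQ (@sum_two _ _ _ k j hne); last by move=> p h1 h2; rewrite hbd hdd0 // expr0n /= mulr0 mul0r.
  rewrite !hbd ddk ddj sqrrN /K; field.
  by rewrite !gt_eqF.
move=> h.
have : l * (e * g k - e * g j) + e ^+ 2 * K = e * (e * K - d).
  by rewrite /d; ring.
move=> hh; rewrite hh in h.
have : e * (e * K - d) < 0.
  rewrite pmulr_rlt0 // subr_lt0.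
  apply: (le_lt_trans heK). by rewrite ltr_pdivrMr // ltr_pMr // ltr1n.
by rewrite ltNge h.
Qed.

Lemma sum_pos_in (R : realType) (m : nat) (mu : 'I_m -> R) (S : {set 'I_m}) :
  (forall j, 0 < mu j) -> S != finset.set0 -> 0 < \sum_(j in S) mu j.
Proof.
move=> hmu /set0Pn [j0 hj0]; rewrite (big_setD1 j0) //=.
by apply: ltr_wpDr; [apply: sumr_ge0 => i _; exact: ltW | exact: hmu].
Qed.

Lemma lemD (R : realType) (m : nat) (mu c : 'I_m -> R) (l : R) :
  (0 < m)%N -> (forall j, 0 < mu j) -> 0 < l ->
  exists b, in_simplex b /\ minlev (gl mu c l b) b.
Proof.
move=> hm hmu hl.
pose nu := fun S : {set 'I_m} => (l + \sum_(j in S) c j) / \sum_(j in S) mu j.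
have hT : [set: 'I_m]%SET != finset.set0 by apply/set0Pn; exists (Ordinal hm); rewrite inE.
case: (@arg_minP _ R _ [set: 'I_m]%SET (fun S => S != finset.set0) nu hT) => S hS hmin.
set v := nu S.
set MS := \sum_(j in S) mu j.
set CS := \sum_(j in S) c j.
have hMS : 0 < MS := sum_pos_in hmu hS.
have f1 : v * MS = l + CS by rewrite /v /nu -/MS -/CS mulfVK // gt_eqF.
have hin : forall j, j \in S -> c j <= v * mu j.
  move=> j hj.
  have e1 : MS = mu j + \sum_(i in S :\ j) mu i by rewrite /MS (big_setD1 j).
  have e2 : CS = c j + \sum_(i in S :\ j) c i by rewrite /CS (big_setD1 j).
  have : v * \sum_(i in S :\ j) mu i <= l + \sum_(i in S :\ j) c i.
    case: (eqVneq (S :\ j) finset.set0) => [->|hne]; first by rewrite !big_set0 mulr0 addr0 ltW.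
    have := hmin _ hne; rewrite /= -/v /nu => h.
    by rewrite -ler_pdivlMr ?sum_pos_in.
  move: f1; rewrite e1 e2 mulrDr => f1 h; lra.
have hout : forall j, j \notin S -> v * mu j <= c j.
  move=> j hj.
  have hne : j |: S != finset.set0 by apply/set0Pn; exists j; rewrite setU11.
  have := hmin _ hne; rewrite /= -/v /nu !big_setU1 //= -/MS -/CS.
  rewrite ler_pdivlMr ?addr_gt0 // => h; move: f1 h; rewrite mulrDr => f1 h; lra.
pose b := fun j => if j \in S then (v * mu j - c j) / l else 0.
exists b; split; first split.
- move=> j; rewrite /b; case: ifP => // hj; apply: divr_ge0; last exact: ltW.
  by rewrite subr_ge0; exact: hin.
- rewrite /b -big_mkcond /= -mulr_suml sumrB -mulr_sumr -/MS -/CS f1.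
  by rewrite addrK mulfV // gt_eqF.
- have hg : forall j, gl mu c l b j = if j \in S then v else c j / mu j.
    move=> j; rewrite /gl /b; case: ifP => hj; last by rewrite mulr0 add0r.
    by have := hmu j => hmj; field; rewrite !gt_eqF.
  have hv : forall k, v <= gl mu c l b k.
    move=> k; rewrite hg; case: ifP => hk //.
    by rewrite ler_pdivlMr // hout // hk.
  move=> j hj k; rewrite hg; case: ifP => hjS; first exact: hv.
  by move: hj; rewrite /b hjS lt_irreflexive.
Qed.

Definition cothers (R : realType) (n m : nat) (s0 : 'I_m -> R) (lam : 'I_n -> R)
  (a : profile R n m) (i : 'I_n) (j : 'I_m) : R :=
  s0 j + \sum_(k < n | k != i) lam k * a k j.
Definition lev (R : realType) (n m : nat) (mu s0 : 'I_m -> R) (lam : 'I_n -> R)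
  (a : profile R n m) (j : 'I_m) : R :=
  (s0 j + \sum_(k < n) lam k * a k j) / mu j.

Lemma upd_same (R : realType) (n m : nat) (a : profile R n m) i b : upd a i b i = b.
Proof. by rewrite /upd eqxx. Qed.
Lemma upd_other (R : realType) (n m : nat) (a : profile R n m) i b k : k != i -> upd a i b k = a k.
Proof. by rewrite /upd => /negbTE ->. Qed.
Lemma upd_id (R : realType) (n m : nat) (a : profile R n m) i : upd a i (a i) = a.
Proof. apply: funext => k; rewrite /upd; by case: eqP => // ->. Qed.
Lemma upd_upd (R : realType) (n m : nat) (a : profile R n m) i b b' : upd (upd a i b) i b' = upd a i b'.
Proof. apply: funext => k; rewrite /upd; case: eqP => //. Qed.

Lemma cothers_upd (R : realType) (n m : nat) (s0 : 'I_m -> R) (lam : 'I_n -> R) a i b :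
  cothers s0 lam (upd a i b) i = cothers s0 lam a i.
Proof.
apply: funext => j; rewrite /cothers; congr (_ + _); apply: eq_bigr => k hk.
by rewrite upd_other.
Qed.

Lemma cost_upd (R : realType) (n m : nat) (mu s0 : 'I_m -> R) (lam : 'I_n -> R) a i b :
  cost mu s0 lam i (upd a i b) = FF mu (cothers s0 lam a i) (lam i) b.
Proof.
rewrite /cost /FF; apply: eq_bigr => j _; rewrite upd_same.
by rewrite -(cothers_upd s0 lam a i b).
Qed.

Lemma lev_upd (R : realType) (n m : nat) (mu s0 : 'I_m -> R) (lam : 'I_n -> R) a i b j :
  lev mu s0 lam (upd a i b) j = gl mu (cothers s0 lam a i) (lam i) b j.
Proof.
rewrite /lev /gl /cothers (bigD1 i) //= upd_same addrCA; congr ((_ + (_ + _)) / _).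
by apply: eq_bigr => k hk; rewrite upd_other.
Qed.

Lemma lev_gl (R : realType) (n m : nat) (mu s0 : 'I_m -> R) (lam : 'I_n -> R) a i j :
  lev mu s0 lam a j = gl mu (cothers s0 lam a i) (lam i) (a i) j.
Proof. by rewrite -lev_upd upd_id. Qed.

Definition Inv (R : realType) (n m : nat) (mu s0 : 'I_m -> R) (lam : 'I_n -> R)
  (a : profile R n m) (P : 'I_n -> Prop) : Prop :=
  feasible a /\ forall k, P k -> minlev (lev mu s0 lam a) (a k).

Lemma inv_step (R : realType) (n m : nat) (mu s0 : 'I_m -> R) (lam : 'I_n -> R)
  (hmu : forall j, 0 < mu j) (hlam : forall i, 0 < lam i)
  (a : profile R n m) (P : 'I_n -> Prop) i b :
  Inv mu s0 lam a P -> in_simplex b -> minlev (lev mu s0 lam (upd a i b)) b ->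
  Inv mu s0 lam (upd a i b) (fun k => P k \/ k = i).
Proof.
move=> [hfa hP] hb hbm; split.
  by move=> k; rewrite /upd; case: eqP => // _; exact: hfa.
move=> k hk; case: (eqVneq k i) => [->|hki]; first by rewrite upd_same.
have {}hk : P k by case: hk => // e; move: hki; rewrite e eqxx.
rewrite upd_other //.
set g' := lev mu s0 lam (upd a i b); set g := lev mu s0 lam a.
have hE : forall p, (g' p - g p) * mu p = lam i * (b p - a i p).
  move=> p; rewrite /g' /g lev_upd (lev_gl mu s0 lam a i) /gl.
  by have := hmu p => hp; field; rewrite gt_eqF.
move=> j hj l; rewrite leNgt; apply/negP => hlt.
have hmk := hP k hk j hj.
case: hb => hb0 hb1; have [ha0 ha1] := hfa i.
have hgj : g' j <= g j.
  have := hb0 j; rewrite le0r => /orP[/eqP hbj|hbj].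
    have := hE j; rewrite hbj => e.
    have : (g' j - g j) * mu j <= 0.
      by rewrite e sub0r mulrN oppr_le0 mulr_ge0 // ltW.
    by rewrite pmulr_lle0 // subr_le0.
  by have := hbm j hbj l; rewrite leNgt hlt.
have hEle : forall p, lam i * (b p - a i p) <= 0.
  move=> p; have := hb0 p; rewrite le0r => /orP[/eqP ->|hbp].
    by rewrite sub0r mulrN oppr_le0 mulr_ge0 // ltW.
  have h1 : g' p <= g' l := hbm p hbp l; have h2 : g j <= g p := hmk p; rewrite -hE.
  rewrite pmulr_lle0 //; lra.
have hEl : lam i * (b l - a i l) < 0.
  rewrite -hE pmulr_llt0 //; have : g j <= g l := hmk l; lra.
have : \sum_(p < m) lam i * (b p - a i p) = 0 by rewrite -mulr_sumr sumrB hb1 ha1 subrr mulr0.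
rewrite (bigD1 l) //= => e.
have : \sum_(p < m | p != l) lam i * (b p - a i p) <= 0 by apply: sumr_le0 => p _; exact: hEle.
lra.
Qed.

Lemma br_minlev (R : realType) (n m : nat) (mu s0 : 'I_m -> R) (lam : 'I_n -> R)
  (hmu : forall j, 0 < mu j) (hlam : forall i, 0 < lam i) a i b :
  best_response mu s0 lam i a b -> minlev (lev mu s0 lam (upd a i b)) b.
Proof.
move=> [hb hopt].
have -> : lev mu s0 lam (upd a i b) = gl mu (cothers s0 lam a i) (lam i) b.
  by apply: funext => j; rewrite lev_upd.
apply: lemB => // b' hb'; have := hopt b' hb'; by rewrite !cost_upd.
Qed.

Lemma inv_weaken (R : realType) (n m : nat) (mu s0 : 'I_m -> R) (lam : 'I_n -> R)
  a (P Q : 'I_n -> Prop) :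
  Inv mu s0 lam a P -> (forall k, Q k -> P k) -> Inv mu s0 lam a Q.
Proof. by move=> [h1 h2] hQP; split => // k /hQP; exact: h2. Qed.

Lemma inv_minlev_gl (R : realType) (n m : nat) (mu s0 : 'I_m -> R) (lam : 'I_n -> R)
  a (P : 'I_n -> Prop) i :
  Inv mu s0 lam a P -> P i -> minlev (gl mu (cothers s0 lam a i) (lam i) (a i)) (a i).
Proof.
move=> [_ h] hi.
have -> : gl mu (cothers s0 lam a i) (lam i) (a i) = lev mu s0 lam a.
  by apply: funext => j; rewrite (lev_gl mu s0 lam a i).
exact: h.
Qed.

Lemma inv_NE (R : realType) (n m : nat) (mu s0 : 'I_m -> R) (lam : 'I_n -> R)
  (hmu : forall j, 0 < mu j) (hlam : forall i, 0 < lam i) a :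
  Inv mu s0 lam a (fun _ => True) -> pure_NE mu s0 lam a.
Proof.
move=> hI; split; first by case: hI.
move=> i b hb.
rewrite -{1}(upd_id a i) !cost_upd.
have hA := lemA hmu (ltW (hlam i)) (proj1 hI i) hb (inv_minlev_gl hI (I : True)).
have := QQ_ge0 (lam i) (a i) b hmu; lra.
Qed.

Lemma inv_fixed (R : realType) (n m : nat) (mu s0 : 'I_m -> R) (lam : 'I_n -> R)
  (hmu : forall j, 0 < mu j) (hlam : forall i, 0 < lam i) a i b :
  Inv mu s0 lam a (fun _ => True) -> best_response mu s0 lam i a b -> upd a i b = a.
Proof.
move=> hI [hb hopt].
have hai := proj1 hI i.
have h := hopt (a i) hai; rewrite upd_id -{2}(upd_id a i) !cost_upd in h.
have -> : b = a i.
  exact: (lemC hmu (hlam i) hai hb (inv_minlev_gl hI (I : True)) h).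
exact: upd_id.
Qed.

Lemma tot_upd (R : realType) (n m : nat) (s0 : 'I_m -> R) (lam : 'I_n -> R) (a : profile R n m) i b j :
  s0 j + \sum_(k < n) lam k * upd a i b k j = lam i * b j + cothers s0 lam a i j.
Proof.
rewrite /cothers (bigD1 i) //= upd_same addrCA; congr (_ + (_ + _)).
by apply: eq_bigr => k hk; rewrite upd_other.
Qed.

Definition Phi (R : realType) (n m : nat) (mu s0 : 'I_m -> R) (lam : 'I_n -> R) (a : profile R n m) : R :=
  \sum_(j < m) (s0 j + \sum_(k < n) lam k * a k j) ^+ 2 / (2 * mu j).

Lemma Phi_upd (R : realType) (n m : nat) (mu s0 : 'I_m -> R) (lam : 'I_n -> R)
  (hmu : forall j, 0 < mu j) a i b :
  Phi mu s0 lam (upd a i b) - cost mu s0 lam i (upd a i b) =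
  \sum_(j < m) (cothers s0 lam a i j) ^+ 2 / (2 * mu j).
Proof.
rewrite cost_upd /Phi /FF -sumrB; apply: eq_bigr => j _; rewrite tot_upd.
by have := hmu j => h; field; rewrite gt_eqF.
Qed.

Unset Implicit Arguments.

Theorem theorem1 (R : realType) (n m : nat) (mu s0 : 'I_m -> R) (lam : 'I_n -> R)
  (hm : (0 < m)%N)
  (hmu : forall j, 0 < mu j) (hs0 : forall j, 0 <= s0 j)
  (hlam : forall i, 0 < lam i) :
  (exists Phi : profile R n m -> R, exact_potential mu s0 lam Phi) /\
  (exists a : profile R n m, pure_NE mu s0 lam a) /\
  (forall (sched : nat -> 'I_n) (x : nat -> profile R n m),
     BR_dynamics mu s0 lam sched x ->
     exists astar : profile R n m,
       pure_NE mu s0 lam astar /\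
       forall i j, (fun t => x t i j) @ \oo --> astar i j).
Proof.
split.
  exists (Phi mu s0 lam) => a i b b' _ _ _.
  have h1 := @Phi_upd _ _ _ mu s0 lam hmu a i b.
  have h2 := @Phi_upd _ _ _ mu s0 lam hmu a i b'.
  lra.
split.
  have : forall k, (k <= n)%N -> exists a, Inv mu s0 lam a (fun p => (p < k)%N).
    elim=> [_|k IH hk].
      have [b0 [hb0 _]] := lemD s0 hm hmu ltr01.
      by exists (fun _ => b0); split.
    have [a ha] := IH (ltnW hk).
    pose i := Ordinal hk.
    have [b [hb hbm]] := lemD (cothers s0 lam a i) hm hmu (hlam i).
    exists (upd a i b).
    have hbm' : minlev (lev mu s0 lam (upd a i b)) b.
      have -> : lev mu s0 lam (upd a i b) = gl mu (cothers s0 lam a i) (lam i) b.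
        by apply: funext => j; rewrite lev_upd.
      exact: hbm.
    apply: (inv_weaken (inv_step hmu hlam ha hb hbm')) => p hp.
    have := hp; rewrite ltnS leq_eqVlt => /orP[/eqP e|]; last by left.
    by right; apply: val_inj.
  move=> /(_ n (leqnn n)) [a ha]; exists a; apply: inv_NE => //.
  by apply: (inv_weaken ha) => p _; exact: ltn_ord.
move=> sched x [hx0 [hsch hstep]].
have hinv : forall t, Inv mu s0 lam (x t) (fun p => (p < t)%N).
  elim=> [|t IH]; first by split.
  have [b [hbr ->]] := hstep t.
  apply: (inv_weaken (inv_step hmu hlam IH (proj1 hbr) (br_minlev hmu hlam hbr))) => p hp.
  have := hp; rewrite ltnS leq_eqVlt => /orP[/eqP e|]; last by left.
  right; apply: val_inj; rewrite /= hsch -e modn_small //.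
have hall : forall t, (n <= t)%N -> Inv mu s0 lam (x t) (fun _ => True).
  move=> t ht; apply: (inv_weaken (hinv t)) => p _.
  exact: (leq_trans (ltn_ord p) ht).
have hconst : forall t, (n <= t)%N -> x t = x n.
  elim=> [|t IH ht]; first by move=> h; congr x; apply/eqP; rewrite eq_sym -leqn0.
  case: (eqVneq t.+1 n) => [e|hne]; first by congr x.
  have [b [hbr ->]] := hstep t.
  have htn : (n <= t)%N by rewrite leq_eqVlt eq_sym (negbTE hne) /= in ht.
  by rewrite (inv_fixed hmu hlam (hall _ htn) hbr) IH.
exists (x n); split; first exact: inv_NE (hall n (leqnn n)).
move=> i j; apply: cvg_near_cst.
by exists n => // t /= ht; rewrite hconst.
Qed.
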